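(* Let $S$ be a finite nonempty set of positive integers, $s=\max S$, and $r\ge 1$ an integer. The minimum density of an $r$-identifying code in the distance graph $G(S)$ is achieved by a periodic set with period at most $(6sr)2^{6sr}$.
   Context: The distance graph $G(S)$ has vertex set $\mathbb{Z}$, with $i,j$ adjacent iff $|i-j|\in S$. For a vertex $u$, $B_r(u)$ is the set of vertices at graph distance at most $r$ from $u$ in $G(S)$. A set $A\subseteq\mathbb{Z}$ is an $r$-identifying code if for every pair of distinct vertices $u,v$, the sets $A\cap B_r(u)$ and $A\cap B_r(v)$ are nonempty and distinct. The density of $A$ is $\delta(A)=\limsup_{N\to\infty}\frac{|A\cap[-N,N]|}{2N+1}$. A set $A$ is periodic with period $p$ if $A+p=A$. *)

(* Defs.v *)
From Stdlib Require Import ZArith List Reals.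
From Coquelicot Require Import Coquelicot.
Import ListNotations.
Open Scope Z_scope.

Definition adj (S : list Z) (i j : Z) : Prop := In (Z.abs (i - j)) S.

(* within S n u v : graph distance from u to v in G(S) is at most n. *)
Inductive within (D : list Z) : nat -> Z -> Z -> Prop :=
| within_refl : forall n u, within D n u u
| within_step : forall n u v w, adj D u v -> within D n v w -> within D (Datatypes.S n) u w.

Definition ball (S : list Z) (r : nat) (u v : Z) : Prop := within S r u v.

(* A subset of Z is represented by its (boolean) indicator function. *)
Definition identifying (S : list Z) (r : nat) (A : Z -> bool) : Prop :=
  (forall u, exists a, A a = true /\ ball S r u a) /\
  (forall u v, u <> v ->
     exists a, A a = true /\ ~ (ball S r u a <-> ball S r v a)).

Definition count_in (A : Z -> bool) (N : nat) : nat :=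
  length (filter A (map (fun k => Z.of_nat k - Z.of_nat N) (seq 0 (2 * N + 1)))).

Definition density (A : Z -> bool) : Rbar :=
  LimSup_seq (fun N => (INR (count_in A N) / INR (2 * N + 1))%R).

Definition periodic (A : Z -> bool) (p : Z) : Prop := forall x, A (x + p) = A x.

Definition maxS (S : list Z) : Z := fold_right Z.max 0 S.

(* Main.v *)
Require Import Defs.
From Stdlib Require Import ZArith List Reals Lia Lra Classical Wf_nat.
From Coquelicot Require Import Coquelicot.
Import Defs.
Import ListNotations.
Open Scope Z_scope.

Lemma maxS_ge S x : In x S -> x <= maxS S.
Proof. induction S as [|y t IH]; simpl; [tauto|]. intros [->|H]; [lia|]. specialize (IH H); lia. Qed.

Lemma maxS_in S : S <> nil -> (forall x, In x S -> 0 < x) -> In (maxS S) S.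
Proof.
  induction S as [|y t IH]; [tauto|]. intros _ Hp. simpl.
  destruct t as [|z t'].
  - simpl. left. specialize (Hp y (or_introl eq_refl)). lia.
  - assert (Hin: In (maxS (z::t')) (z::t')) by (apply IH; [discriminate| intros; apply Hp; simpl; auto]).
    destruct (Z.max_spec y (maxS (z::t'))) as [[_ ->]|[_ ->]]; [right; exact Hin| left; auto].
Qed.

Lemma within_dist (S : list Z) (n : nat) (u v : Z) : within S n u v -> Z.abs (u - v) <= maxS S * Z.of_nat n.
Proof.
  induction 1 as [n u|n u v w Ha _ IH].
  - assert (0 <= maxS S) by (induction S; simpl; lia). nia.
  - unfold adj in Ha. apply maxS_ge in Ha. rewrite Nat2Z.inj_succ. nia.
Qed.

Lemma within_tr (S : list Z) (n : nat) (u v t : Z) : within S n u v -> within S n (u + t) (v + t).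
Proof.
  induction 1 as [n u|n u v w Ha _ IH]. constructor.
  eapply within_step; [|exact IH]. unfold adj in *. replace (u + t - (v + t)) with (u - v) by lia. exact Ha.
Qed.

Lemma ball_tr S r u v t : ball S r (u + t) v <-> ball S r u (v - t).
Proof.
  unfold ball; split; intro H.
  - apply (within_tr _ _ _ _ (-t)) in H. now replace (u + t + - t) with u in H by lia.
  - apply (within_tr _ _ _ _ t) in H. now replace (v - t + t) with v in H by lia.
Qed.

Definition Loc S r m (B : Z -> bool) u :=
  (exists a, B a = true /\ ball S r u a) /\
  (forall v, u < v <= u + 2*m -> exists a, B a = true /\ ~(ball S r u a <-> ball S r v a)).
Definition valid S r m B := forall u, Loc S r m B u.

Lemma valid_ident S r m B : (forall u a, ball S r u a -> Z.abs (u - a) <= m) ->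
  valid S r m B -> identifying S r B.
Proof.
  intros Hb HV. split. intro u; apply (HV u).
  assert (K: forall u v, u < v -> exists a, B a = true /\ ~ (ball S r u a <-> ball S r v a)).
  { intros u v Huv. destruct (Z_le_dec v (u + 2*m)).
    - apply (proj2 (HV u)); lia.
    - destruct (proj1 (HV u)) as [a [Ha1 Ha2]]. exists a; split; auto.
      intros [H1 _]. specialize (H1 Ha2). apply Hb in H1. apply Hb in Ha2. lia. }
  intros u v Huv. destruct (Z_lt_le_dec u v). auto.
  destruct (K v u) as [a [? H]]. lia. exists a; split; auto. tauto.
Qed.

Lemma ident_valid S r m B : identifying S r B -> valid S r m B.
Proof. intros [H1 H2] u. split; auto. intros v Hv. apply H2. lia. Qed.

Lemma Loc_shift S r m C u t : Loc S r m C (u + t) -> Loc S r m (fun x => C (x + t)) u.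
Proof.
  intros [[a [Ha1 Ha2]] H2]. split.
  - exists (a - t). split. now replace (a - t + t) with a by lia. now apply ball_tr.
  - intros v Hv. destruct (H2 (v + t)) as [b [Hb1 Hb2]]; [lia|].
    exists (b - t). split. now replace (b - t + t) with b by lia.
    rewrite <- !ball_tr. exact Hb2.
Qed.

Lemma Loc_ext S r m B C u : (forall x, B x = C x) -> Loc S r m B u -> Loc S r m C u.
Proof.
  intros He [[a [Ha1 Ha2]] H2]. split. exists a; rewrite <- He; auto.
  intros v Hv. destruct (H2 v Hv) as [b [? ?]]; exists b; rewrite <- He; auto.
Qed.

Lemma Loc_local S r m B C u : (forall u a, ball S r u a -> Z.abs (u - a) <= m) ->
  (forall x, u - m <= x <= u + 3*m -> B x = C x) -> Loc S r m B u -> Loc S r m C u.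
Proof.
  intros Hb He [[a [Ha1 Ha2]] H2]. split.
  - exists a. split; auto. rewrite <- He; auto. apply Hb in Ha2; lia.
  - intros v Hv. destruct (H2 v Hv) as [b [Hb1 Hb2]]. exists b. split; auto.
    rewrite <- He; auto.
    destruct (Z_le_dec (u - m) b); destruct (Z_le_dec b (v + m)); try lia;
    exfalso; apply Hb2; split; intro HH; apply Hb in HH; lia.
Qed.

Fixpoint word (B : Z -> bool) (a : Z) (n : nat) : list bool :=
  match n with O => [] | Datatypes.S n => B a :: word B (a + 1) n end.
Definition cnt (l : list bool) : nat := length (filter (fun b => b) l).
Definition wt B a n := cnt (word B a n).
Definition pext (w : list bool) (x : Z) : bool :=
  nth (Z.to_nat (x mod Z.of_nat (length w))) w false.

Lemma word_length B a n : length (word B a n) = n.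
Proof. revert a; induction n; simpl; auto. Qed.

Lemma word_nth B a n k : (k < n)%nat -> nth k (word B a n) false = B (a + Z.of_nat k).
Proof.
  revert a k; induction n; intros a k Hk; [lia|]. destruct k; simpl.
  - f_equal; lia.
  - rewrite IHn by lia. f_equal; lia.
Qed.

Lemma word_ext B C a b n : (forall k, (k < n)%nat -> B (a + Z.of_nat k) = C (b + Z.of_nat k)) ->
  word B a n = word C b n.
Proof.
  revert a b; induction n; intros a b H; simpl; auto. f_equal.
  - specialize (H 0%nat). simpl Z.of_nat in H. rewrite !Z.add_0_r in H. apply H; lia.
  - apply IHn. intros k Hk. specialize (H (Datatypes.S k)). rewrite Nat2Z.inj_succ in H.
    replace (a + 1 + Z.of_nat k) with (a + Z.succ (Z.of_nat k)) by lia.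
    replace (b + 1 + Z.of_nat k) with (b + Z.succ (Z.of_nat k)) by lia. apply H; lia.
Qed.

Lemma word_eq_pt B C a b n : word B a n = word C b n ->
  forall k, (k < n)%nat -> B (a + Z.of_nat k) = C (b + Z.of_nat k).
Proof. intros H k Hk. rewrite <- !word_nth with (n := n) by auto. now rewrite H. Qed.

Lemma word_app B a n1 n2 : word B a (n1 + n2) = word B a n1 ++ word B (a + Z.of_nat n1) n2.
Proof.
  revert a; induction n1; intros a; simpl. now replace (a + 0) with a by lia.
  f_equal. rewrite IHn1. do 2 f_equal. lia.
Qed.

Lemma cnt_app l1 l2 : cnt (l1 ++ l2) = (cnt l1 + cnt l2)%nat.
Proof. unfold cnt. now rewrite filter_app, length_app. Qed.

Lemma cnt_le l : (cnt l <= length l)%nat.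
Proof. unfold cnt. apply filter_length_le. Qed.

Lemma wt_add B a n1 n2 : wt B a (n1 + n2) = (wt B a n1 + wt B (a + Z.of_nat n1) n2)%nat.
Proof. unfold wt. now rewrite word_app, cnt_app. Qed.

Lemma wt_ext B C a b n : (forall k, (k < n)%nat -> B (a + Z.of_nat k) = C (b + Z.of_nat k)) ->
  wt B a n = wt C b n.
Proof. intro H; unfold wt; now rewrite (word_ext B C a b n H). Qed.

Lemma wt_le B a n : (wt B a n <= n)%nat.
Proof. unfold wt. rewrite <- (word_length B a n) at 2. apply cnt_le. Qed.

Lemma pext_per w x k : pext w (x + k * Z.of_nat (length w)) = pext w x.
Proof. unfold pext. now rewrite Z_mod_plus_full. Qed.

Lemma pext_word B a p x : 0 <= x < Z.of_nat p -> pext (word B a p) x = B (a + x).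
Proof.
  intros Hx. unfold pext. rewrite word_length. rewrite Z.mod_small by lia.
  rewrite word_nth by lia. f_equal. lia.
Qed.

Lemma wt_shift1 P p a : (forall x, P (x + Z.of_nat p) = P x) -> wt P (a + 1) p = wt P a p.
Proof.
  intros Hp. assert (H := wt_add P a 1 p). assert (H2 := wt_add P a p 1).
  rewrite Nat.add_comm in H2. rewrite H2 in H.
  assert (E: wt P (a + Z.of_nat p) 1 = wt P a 1) by (unfold wt; simpl; now rewrite Hp).
  rewrite E in H. replace (a + Z.of_nat 1) with (a + 1) in H by lia. lia.
Qed.

Lemma wt_shift P p a b : (forall x, P (x + Z.of_nat p) = P x) -> wt P a p = wt P b p.
Proof.
  intros Hp. assert (Hn: forall a (d : nat), wt P (a + Z.of_nat d) p = wt P a p).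
  { intros a0 d; induction d. now replace (a0 + Z.of_nat 0) with a0 by lia.
    rewrite Nat2Z.inj_succ. replace (a0 + Z.succ (Z.of_nat d)) with (a0 + Z.of_nat d + 1) by lia.
    now rewrite wt_shift1. }
  destruct (Z_le_dec a b).
  - replace b with (a + Z.of_nat (Z.to_nat (b - a))) by lia. now rewrite Hn.
  - replace a with (b + Z.of_nat (Z.to_nat (a - b))) by lia. now rewrite Hn.
Qed.

Fixpoint allw (n : nat) : list (list bool) :=
  match n with O => [[]] | Datatypes.S n => map (cons true) (allw n) ++ map (cons false) (allw n) end.

Lemma allw_length n : length (allw n) = (2 ^ n)%nat.
Proof. induction n; simpl; auto. rewrite length_app, !length_map. lia. Qed.

Lemma allw_in w : In w (allw (length w)).
Proof.
  induction w as [|b w IH]; simpl; auto. apply in_or_app. destruct b; [left|right]; now apply in_map.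
Qed.

Definition ldec := list_eq_dec Bool.bool_dec.

Lemma pigeon n (f : Z -> list bool) Ls a : (length Ls < n)%nat ->
  (forall t, (t < n)%nat -> In (f (a + Z.of_nat t)) Ls) ->
  exists x y, (x < y < n)%nat /\ f (a + Z.of_nat x) = f (a + Z.of_nat y).
Proof.
  revert Ls a; induction n; intros Ls a Hl Hin; [lia|].
  destruct (classic (exists y, (0 < y < Datatypes.S n)%nat /\ f (a + Z.of_nat y) = f a)) as [[y [Hy Hf]]|Hno].
  - exists 0%nat, y. split; auto. now replace (a + Z.of_nat 0) with a by lia.
  - assert (Hfa: In (f a) Ls) by (specialize (Hin 0%nat); replace (a + Z.of_nat 0) with a in Hin by lia; apply Hin; lia).
    assert (Hr := remove_length_lt ldec Ls (f a) Hfa).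
    destruct (IHn (remove ldec (f a) Ls) (a + 1)) as [x [y [Hxy Hf]]].
    + lia.
    + intros t Ht. apply in_in_remove.
      * intro He. apply Hno. exists (Datatypes.S t). split; [lia|]. rewrite Nat2Z.inj_succ.
        now replace (a + Z.succ (Z.of_nat t)) with (a + 1 + Z.of_nat t) by lia.
      * specialize (Hin (Datatypes.S t)). rewrite Nat2Z.inj_succ in Hin.
        replace (a + Z.succ (Z.of_nat t)) with (a + 1 + Z.of_nat t) in Hin by lia. apply Hin; lia.
    + exists (Datatypes.S x), (Datatypes.S y). split; [lia|]. rewrite !Nat2Z.inj_succ.
      replace (a + Z.succ (Z.of_nat x)) with (a + 1 + Z.of_nat x) by lia.
      replace (a + Z.succ (Z.of_nat y)) with (a + 1 + Z.of_nat y) by lia. exact Hf.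
Qed.

Lemma P_agree B i p K : (0 < p)%nat -> word B i K = word B (i + Z.of_nat p) K ->
  forall z, i <= z < i + Z.of_nat p + Z.of_nat K -> pext (word B i p) (z - i) = B z.
Proof.
  intros Hp HK.
  assert (G: forall n : nat, forall z, i <= z < i + Z.of_nat p + Z.of_nat K -> z - i <= Z.of_nat n ->
     pext (word B i p) (z - i) = B z).
  { induction n; intros z Hz Hn.
    - rewrite pext_word by lia. f_equal; lia.
    - destruct (Z_lt_le_dec z (i + Z.of_nat p)).
      + rewrite pext_word by lia. f_equal; lia.
      + replace (z - i) with ((z - Z.of_nat p - i) + 1 * Z.of_nat (length (word B i p)))
          by (rewrite word_length; lia).
        rewrite pext_per. rewrite IHn by lia.
        assert (E := word_eq_pt _ _ _ _ _ HK (Z.to_nat (z - Z.of_nat p - i)) ltac:(lia)).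
        rewrite Z2Nat.id in E by lia.
        replace (i + (z - Z.of_nat p - i)) with (z - Z.of_nat p) in E by lia.
        rewrite E. f_equal; lia. }
  intros z Hz. apply (G (Z.to_nat (z - i))); lia.
Qed.

Lemma valid_P S r m B i p : (forall u a, ball S r u a -> Z.abs (u - a) <= m) -> 0 <= m ->
  (0 < p)%nat -> valid S r m B ->
  word B i (Z.to_nat (4*m)) = word B (i + Z.of_nat p) (Z.to_nat (4*m)) ->
  valid S r m (fun z => pext (word B i p) (z - i)).
Proof.
  intros Hb Hm Hp HV HK u. set (P := fun z => pext (word B i p) (z - i)).
  set (q := (u - i - m) / Z.of_nat p).
  set (u' := u - q * Z.of_nat p).
  assert (Hmod: u' = i + m + (u - i - m) mod Z.of_nat p).
  { unfold u', q. rewrite (Z.mod_eq (u - i - m) (Z.of_nat p)) by lia. lia. }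
  assert (Hr := Z.mod_pos_bound (u - i - m) (Z.of_nat p) ltac:(lia)).
  assert (L1: Loc S r m P u').
  { apply (Loc_local S r m B); auto.
    intros x Hx. unfold P. symmetry. apply (P_agree B i p (Z.to_nat (4*m))); auto. lia. }
  assert (L2 := Loc_shift S r m P u (- q * Z.of_nat p)).
  replace (u + - q * Z.of_nat p) with u' in L2 by (unfold u'; lia).
  apply (Loc_ext S r m _ P u) in L2; auto.
  intro x. unfold P. replace (x + - q * Z.of_nat p - i) with ((x - i) + (-q) * Z.of_nat (length (word B i p)))
    by (rewrite word_length; lia). apply pext_per.
Qed.

Lemma valid_pext S r m B i p : valid S r m (fun z => pext (word B i p) (z - i)) ->
  valid S r m (pext (word B i p)).
Proof.
  intros HV u. apply (Loc_ext S r m (fun x => pext (word B i p) (x + i - i))).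
  intro x; f_equal; lia.
  apply (Loc_shift S r m (fun z => pext (word B i p) (z - i)) u i). apply HV.
Qed.

Lemma cyc S r m c0 p0 : (forall u a, ball S r u a -> Z.abs (u - a) <= m) -> 0 <= m ->
  (forall w, (1 <= length w <= 2 ^ Z.to_nat (4*m))%nat -> valid S r m (pext w) ->
     (c0 * length w <= cnt w * p0)%nat) ->
  forall p B i, (0 < p)%nat -> valid S r m B ->
  word B i (Z.to_nat (4*m)) = word B (i + Z.of_nat p) (Z.to_nat (4*m)) ->
  (c0 * p <= wt B i p * p0)%nat.
Proof.
  intros Hb Hm Hmin p. set (K := Z.to_nat (4*m)) in *.
  induction p as [p IH] using (well_founded_induction lt_wf).
  intros B i Hp HV HK.
  assert (VP := valid_P S r m B i p Hb Hm Hp HV HK).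
  destruct (le_lt_dec p (2 ^ K)) as [Hle|Hgt].
  - assert (H := Hmin (word B i p)). rewrite word_length in H. apply H. lia.
    now apply valid_pext in VP.
  - set (P := fun z => pext (word B i p) (z - i)) in *.
    assert (AG: forall z, i <= z < i + Z.of_nat p + Z.of_nat K -> P z = B z)
      by (intros z Hz; unfold P; apply (P_agree B i p K); auto).
    assert (PER: forall z, P (z + Z.of_nat p) = P z).
    { intro z. unfold P. replace (z + Z.of_nat p - i) with ((z - i) + 1 * Z.of_nat (length (word B i p)))
        by (rewrite word_length; lia). apply pext_per. }
    destruct (pigeon (Datatypes.S (2 ^ K)) (fun t => word B t K) (allw K) i) as [x [y [Hxy Hf]]].
    + rewrite allw_length; lia.
    + intros t _. rewrite <- (word_length B (i + Z.of_nat t) K) at 2. apply allw_in.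
    + simpl in Hf. set (d := (y - x)%nat).
      assert (E1: wt B i p = wt P i p) by (apply wt_ext; intros k Hk; symmetry; apply AG; lia).
      assert (E2: wt P i p = wt P (i + Z.of_nat x) p) by (apply wt_shift; auto).
      assert (E3 := wt_add P (i + Z.of_nat x) d (p - d)).
      replace (d + (p - d))%nat with p in E3 by lia.
      assert (E4: wt P (i + Z.of_nat x) d = wt B (i + Z.of_nat x) d)
        by (apply wt_ext; intros k Hk; apply AG; lia).
      assert (I1: (c0 * d <= wt B (i + Z.of_nat x) d * p0)%nat).
      { apply IH; auto. lia. lia. rewrite Hf. f_equal. lia. }
      assert (I2: (c0 * (p - d) <= wt P (i + Z.of_nat x + Z.of_nat d) (p - d) * p0)%nat).
      { apply IH; auto. lia. lia.
        replace (i + Z.of_nat x + Z.of_nat d + Z.of_nat (p - d)) with (i + Z.of_nat x + Z.of_nat p) by lia.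
        transitivity (word B (i + Z.of_nat y) K).
        - apply word_ext. intros k Hk. rewrite AG by lia. f_equal. lia.
        - rewrite <- Hf. apply word_ext. intros k Hk. replace (i + Z.of_nat x + Z.of_nat p + Z.of_nat k) with ((i + Z.of_nat x + Z.of_nat k) + Z.of_nat p) by lia. rewrite PER. rewrite AG by lia. reflexivity. }
      rewrite E1, E2, E3, E4. nia.
Qed.

Lemma lower (K c0 p0 : nat) (B : Z -> bool) :
  (c0 <= p0)%nat ->
  (forall p i, (0 < p)%nat -> word B i K = word B (i + Z.of_nat p) K -> (c0 * p <= wt B i p * p0)%nat) ->
  forall L Ls, (length Ls <= L)%nat -> forall n a,
  (forall t, (t <= n)%nat -> In (word B (a + Z.of_nat t) K) Ls) ->
  (c0 * n <= wt B a n * p0 + p0 * length Ls)%nat.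
Proof.
  intros Hc Hcyc L. induction L as [|L IHL]; intros Ls HL n.
  - intros a Hin. destruct Ls; [|simpl in HL; lia]. exfalso. apply (Hin 0%nat); lia.
  - induction n as [n IHn] using (well_founded_induction lt_wf); intros a Hin.
    destruct n as [|n']. { simpl. lia. }
    destruct (classic (exists t, (1 <= t <= Datatypes.S n')%nat /\ word B (a + Z.of_nat t) K = word B a K))
      as [[t [Ht He]]|Hno].
    + assert (E := wt_add B a t (Datatypes.S n' - t)).
      replace (t + (Datatypes.S n' - t))%nat with (Datatypes.S n') in E by lia.
      assert (I1: (c0 * t <= wt B a t * p0)%nat) by (apply Hcyc; auto; lia).
      assert (I2 := IHn (Datatypes.S n' - t)%nat ltac:(lia) (a + Z.of_nat t)).
      assert (I2': (c0 * (Datatypes.S n' - t) <= wt B (a + Z.of_nat t) (Datatypes.S n' - t) * p0 + p0 * length Ls)%nat).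
      { apply I2. intros t' Ht'. replace (a + Z.of_nat t + Z.of_nat t') with (a + Z.of_nat (t + t')) by lia.
        apply Hin; lia. }
      rewrite E. nia.
    + assert (Hfa: In (word B a K) Ls) by (specialize (Hin 0%nat); replace (a + Z.of_nat 0) with a in Hin by lia; apply Hin; lia).
      assert (Hr := remove_length_lt ldec Ls (word B a K) Hfa).
      assert (I := IHL (remove ldec (word B a K) Ls) ltac:(lia) n' (a + 1)).
      assert (I': (c0 * n' <= wt B (a + 1) n' * p0 + p0 * length (remove ldec (word B a K) Ls))%nat).
      { apply I. intros t Ht. apply in_in_remove.
        - intro He. apply Hno. exists (Datatypes.S t). split; [lia|].
          rewrite <- He. f_equal. lia.
        - replace (a + 1 + Z.of_nat t) with (a + Z.of_nat (Datatypes.S t)) by lia. apply Hin; lia. }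
      assert (E := wt_add B a 1 n'). simpl (1 + n')%nat in E. rewrite E.
      replace (a + Z.of_nat 1) with (a + 1) by lia. nia.
Qed.

Lemma g0 (C : R) : is_lim_seq (fun N => (C / INR (2*N+1))%R) 0%R.
Proof.
  assert (H1: is_lim_seq (fun N => INR (2*N+1)) p_infty).
  { apply is_lim_seq_le_p_loc with INR; [exists 0%nat; intros; apply le_INR; lia | apply is_lim_seq_INR]. }
  assert (H2 := is_lim_seq_inv _ _ H1 ltac:(discriminate)). simpl in H2.
  apply (is_lim_seq_scal_l _ C) in H2. simpl in H2. rewrite Rmult_0_r in H2. exact H2.
Qed.

Lemma real_up (a c p d C : nat) : (0 < p)%nat -> (0 < d)%nat -> (a * p <= c * d + C * p)%nat ->
  (INR a / INR d <= INR c / INR p + INR C / INR d)%R.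
Proof.
  intros Hp Hd H. apply le_INR in H. rewrite plus_INR, !mult_INR in H.
  assert (0 < INR p)%R by (apply lt_0_INR; lia). assert (0 < INR d)%R by (apply lt_0_INR; lia).
  replace (INR a / INR d)%R with ((INR a * INR p) / (INR p * INR d))%R by (field; lra).
  replace (INR c / INR p + INR C / INR d)%R with ((INR c * INR d + INR C * INR p) / (INR p * INR d))%R by (field; lra).
  unfold Rdiv. apply Rmult_le_compat_r; [left; apply Rinv_0_lt_compat; nra| exact H].
Qed.

Lemma real_low (a c p d C : nat) : (0 < p)%nat -> (0 < d)%nat -> (c * d <= a * p + p * C)%nat ->
  (INR c / INR p - INR C / INR d <= INR a / INR d)%R.
Proof.
  intros Hp Hd H. apply le_INR in H. rewrite plus_INR, !mult_INR in H.
  assert (0 < INR p)%R by (apply lt_0_INR; lia). assert (0 < INR d)%R by (apply lt_0_INR; lia).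
  replace (INR a / INR d)%R with ((INR a * INR p) / (INR p * INR d))%R by (field; lra).
  replace (INR c / INR p - INR C / INR d)%R with ((INR c * INR d - INR p * INR C) / (INR p * INR d))%R by (field; lra).
  unfold Rdiv. apply Rmult_le_compat_r; [left; apply Rinv_0_lt_compat; nra| lra].
Qed.

Lemma count_wt A n st c : length (filter A (map (fun k => Z.of_nat k - c) (seq st n))) = wt A (Z.of_nat st - c) n.
Proof.
  revert st; induction n; intros st; simpl; auto. unfold wt in *; simpl.
  replace (Z.of_nat st - c + 1) with (Z.of_nat (Datatypes.S st) - c) by lia.
  unfold cnt in *. simpl. destruct (A (Z.of_nat st - c)); simpl; rewrite IHn; reflexivity.
Qed.

Lemma count_in_wt A N : count_in A N = wt A (- Z.of_nat N) (2 * N + 1).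
Proof. unfold count_in. rewrite count_wt. reflexivity. Qed.

Lemma word_pext w : word (pext w) 0 (length w) = w.
Proof.
  apply nth_ext with false false. apply word_length.
  intros k Hk. rewrite word_length in Hk. rewrite word_nth by auto. unfold pext.
  rewrite Z.mod_small by lia. f_equal. lia.
Qed.

Lemma wt_mult P p a k : (forall x, P (x + Z.of_nat p) = P x) -> wt P a (k * p) = (k * wt P 0 p)%nat.
Proof.
  intros Hp. revert a; induction k; intros a; simpl; auto.
  rewrite wt_add, IHk. rewrite (wt_shift P p a 0 Hp). lia.
Qed.

Lemma wt_mono P a n1 n2 : (n1 <= n2)%nat -> (wt P a n1 <= wt P a n2)%nat.
Proof. intros H. replace n2 with (n1 + (n2 - n1))%nat by lia. rewrite wt_add. lia. Qed.

Lemma allw_len n w : In w (allw n) -> length w = n.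
Proof.
  revert w; induction n; simpl; intros w H. destruct H as [<-|[]]; auto.
  apply in_app_or in H. destruct H as [H|H]; apply in_map_iff in H; destruct H as [w' [<- H]]; simpl; f_equal; auto.
Qed.

Lemma exmin (good : list bool -> Prop) (l : list (list bool)) :
  (forall w, In w l -> (0 < length w)%nat) -> (exists w, In w l /\ good w) ->
  exists w0, In w0 l /\ good w0 /\ forall w, In w l -> good w -> (cnt w0 * length w <= cnt w * length w0)%nat.
Proof.
  induction l as [|a l IH]; intros Hpos [w [Hw Hg]]. destruct Hw.
  destruct (classic (exists w, In w l /\ good w)) as [Hex|Hno].
  - destruct (IH (fun w H => Hpos w (or_intror H)) Hex) as [w0 [Hw0 [Hg0 Hm0]]].
    destruct (classic (good a /\ (cnt a * length w0 < cnt w0 * length a)%nat)) as [[Hga Hlt]|Hn].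
    + exists a. split; [left; auto|]. split; auto. intros w' [<-|Hw'] Hg'; [lia|].
      specialize (Hm0 w' Hw' Hg'). assert (P0 := Hpos w0 (or_intror Hw0)).
      assert (Pa := Hpos a (or_introl eq_refl)). assert (Pw := Hpos w' (or_intror Hw')).
      apply (Nat.mul_le_mono_pos_r _ _ (length w0)); auto.
      apply Nat.le_trans with (cnt w0 * length a * length w')%nat; nia.
    + exists w0. split; [right; auto|]. split; auto. intros w' [Ew|Hw'] Hg'; [subst w'|auto].
      destruct (le_lt_dec (cnt w0 * length a) (cnt a * length w0)); auto. exfalso; apply Hn; auto.
  - destruct Hw as [Ew|Hw]; [subst w|exfalso; apply Hno; eauto].
    exists a. split; [left; auto|]. split; auto. intros w' [Ew|Hw'] Hg'; [subst w'; lia|]. exfalso; apply Hno; eauto.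
Qed.

Lemma within_far (S : list Z) (n : nat) v : 0 <= maxS S -> In (maxS S) S -> within S n v (v + maxS S * Z.of_nat n).
Proof.
  intros H0 Hin. revert v; induction n; intros v.
  - simpl. rewrite Z.mul_0_r, Z.add_0_r. constructor.
  - apply within_step with (v + maxS S).
    + unfold adj. now replace (Z.abs (v - (v + maxS S))) with (maxS S) by lia.
    + replace (v + maxS S * Z.of_nat (Datatypes.S n)) with (v + maxS S + maxS S * Z.of_nat n) by lia. apply IHn.
Qed.

Lemma valid_true S r m : 0 <= maxS S -> In (maxS S) S -> m = maxS S * Z.of_nat r ->
  (forall u a, ball S r u a -> Z.abs (u - a) <= m) -> valid S r m (pext [true]).
Proof.
  intros H0 Hin Hm Hb u. assert (E: forall x, pext [true] x = true).
  { intro x. unfold pext. simpl length. rewrite Z.mod_1_r. reflexivity. }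
  split.
  - exists u. split; auto. constructor.
  - intros v Hv. exists (v + m). split; auto. intros [_ H2].
    assert (Hvb: ball S r v (v + m)) by (subst m; apply within_far; auto).
    apply H2, Hb in Hvb. lia.
Qed.

Theorem corollary6 (S : list Z) (r : nat) :
  S <> nil ->
  (forall x, In x S -> 0 < x) ->
  (1 <= r)%nat ->
  exists (A : Z -> bool) (p : Z),
    0 < p /\
    p <= (6 * maxS S * Z.of_nat r) * 2 ^ (6 * maxS S * Z.of_nat r) /\
    periodic A p /\
    identifying S r A /\
    (forall B : Z -> bool, identifying S r B -> Rbar_le (density A) (density B)).
Proof.
  intros Hne Hpos Hr.
  assert (Hin := maxS_in S Hne Hpos).
  assert (Hs: 1 <= maxS S) by (specialize (Hpos _ Hin); lia).
  set (m := maxS S * Z.of_nat r).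
  assert (Hm: 1 <= m) by (unfold m; nia).
  assert (Hb: forall u a, ball S r u a -> Z.abs (u - a) <= m)
    by (intros u a H; apply within_dist in H; exact H).
  set (K := Z.to_nat (4 * m)).
  set (cands := flat_map allw (seq 1 (2 ^ K))).
  assert (Hcpos: forall w, In w cands -> (0 < length w)%nat).
  { intros w Hw. apply in_flat_map in Hw. destruct Hw as [n [Hn Hw]]. apply allw_len in Hw. apply in_seq in Hn. lia. }
  assert (Hcin: forall w, (1 <= length w <= 2 ^ K)%nat -> In w cands).
  { intros w Hw. apply in_flat_map. exists (length w). split; [apply in_seq; lia|apply allw_in]. }
  destruct (exmin (fun w => valid S r m (pext w)) cands Hcpos) as [w0 [Hw0 [Hg0 Hmin0]]].
  { exists [true]. split. apply Hcin. simpl. assert (0 < 2 ^ K)%nat by (apply Nat.neq_0_lt_0, Nat.pow_nonzero; lia). lia.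
    apply valid_true; auto; lia. }
  set (p0 := length w0). set (c0 := cnt w0).
  assert (Hp0: (0 < p0)%nat) by (apply Hcpos; auto).
  assert (Hp0K: (p0 <= 2 ^ K)%nat).
  { unfold p0. apply in_flat_map in Hw0. destruct Hw0 as [n [Hn Hw]]. apply allw_len in Hw. apply in_seq in Hn. lia. }
  assert (Hmin: forall w, (1 <= length w <= 2 ^ Z.to_nat (4*m))%nat -> valid S r m (pext w) ->
     (c0 * length w <= cnt w * p0)%nat).
  { intros w Hw Hv. apply Hmin0; auto. }
  assert (PER: forall x, pext w0 (x + Z.of_nat p0) = pext w0 x).
  { intro x. unfold p0. rewrite <- (Z.mul_1_l (Z.of_nat (length w0))). apply pext_per. }
  exists (pext w0), (Z.of_nat p0).
  split; [lia|]. split.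
  { replace (6 * maxS S * Z.of_nat r) with (6 * m) by (unfold m; ring).
    assert (E: Z.of_nat (2 ^ K) = 2 ^ (4 * m)).
    { rewrite Nat2Z.inj_pow. unfold K. rewrite Z2Nat.id by lia. reflexivity. }
    assert (Z.of_nat p0 <= 2 ^ (4*m)) by lia.
    assert (2 ^ (4*m) <= 2 ^ (6*m)) by (apply Z.pow_le_mono_r; lia).
    assert (0 < 2 ^ (6*m)) by (apply Z.pow_pos_nonneg; lia). nia. }
  split; [exact PER|]. split; [apply (valid_ident S r m); auto|].
  intros B HB. assert (HV := ident_valid S r m B HB).
  assert (Hcyc := cyc S r m c0 p0 Hb ltac:(lia) Hmin).
  assert (Hc: (c0 <= p0)%nat) by apply cnt_le.
  assert (Low: forall N, (c0 * (2 * N + 1) <= count_in B N * p0 + p0 * 2 ^ K)%nat).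
  { intro N. rewrite count_in_wt. rewrite <- (allw_length K).
    apply (lower K c0 p0 B Hc (fun p i Hp He => Hcyc p B i Hp HV He) (length (allw K)) (allw K) (le_n _)).
    intros t _. rewrite <- (word_length B (- Z.of_nat N + Z.of_nat t) K) at 2. apply allw_in. }
  assert (Up: forall N, (count_in (pext w0) N * p0 <= c0 * (2 * N + 1) + c0 * p0)%nat).
  { intro N. rewrite count_in_wt. set (n := (2 * N + 1)%nat).
    set (k := (n / p0 + 1)%nat).
    assert (Hd := Nat.div_mod_eq n p0). assert (Hmd := Nat.mod_upper_bound n p0 ltac:(lia)).
    assert (Hle: (n <= k * p0)%nat) by (unfold k; nia).
    assert (W1 := wt_mono (pext w0) (- Z.of_nat N) n (k * p0) Hle).
    rewrite (wt_mult (pext w0) p0 _ k PER) in W1.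
    assert (W0: wt (pext w0) 0 p0 = c0) by (unfold wt, c0, p0; now rewrite word_pext).
    rewrite W0 in W1. unfold k in W1. nia. }
  set (x := (INR c0 / INR p0)%R).
  unfold density. apply Rbar_le_trans with (Finite x).
  - eapply Rbar_le_trans.
    + apply LimSup_le with (v := fun N => (x + INR c0 / INR (2 * N + 1))%R).
      exists 0%nat. intros N _. apply real_up; auto; lia.
    + assert (L: is_lim_seq (fun N => (x + INR c0 / INR (2 * N + 1))%R) x).
      { assert (H := is_lim_seq_plus' _ _ x 0%R (is_lim_seq_const x) (g0 (INR c0))).
        rewrite Rplus_0_r in H. exact H. }
      rewrite (is_LimSup_seq_unique _ _ (is_lim_LimSup_seq _ _ L)). apply Rbar_le_refl.
  - eapply Rbar_le_trans.
    2: { apply LimSup_le with (u := fun N => (x - INR (2 ^ K) / INR (2 * N + 1))%R).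
      exists 0%nat. intros N _. apply real_low; auto; lia. }
    assert (L: is_lim_seq (fun N => (x - INR (2 ^ K) / INR (2 * N + 1))%R) x).
    { assert (H := is_lim_seq_minus' _ _ x 0%R (is_lim_seq_const x) (g0 (INR (2 ^ K)))).
      rewrite Rminus_0_r in H. exact H. }
    rewrite (is_LimSup_seq_unique _ _ (is_lim_LimSup_seq _ _ L)). apply Rbar_le_refl.
Qed.
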